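(* Let $n\in\mathbb{N}$ and $\lambda\in(0,n)$. If the algorithm $C_\lambda$ (on inputs in $\{0,1\}^n$) is $(\varepsilon,\delta)$-differentially private, then the bit-sum protocol $P_{n,\lambda}$ is $(\varepsilon,\delta)$-differentially private in the shuffled model.
   Context: An algorithm $M$ on datasets in $\{0,1\}^n$ is $(\varepsilon,\delta)$-differentially private if for all $X,X'$ differing in one coordinate and every set $T$ of outputs, $\Pr[M(X)\in T]\le e^{\varepsilon}\Pr[M(X')\in T]+\delta$. The bit-sum protocol $P_{n,\lambda}$: each of $n$ users with $x_i\in\{0,1\}$ independently draws $b\sim\mathrm{Ber}(\lambda/n)$ and sends $y_i=x_i$ if $b=0$ and a fresh $\mathrm{Ber}(1/2)$ bit if $b=1$; a shuffler outputs $(y_1,\dots,y_n)$ in uniformly random order; the analyzer outputs $\frac{n}{n-\lambda}(\sum_i y_i-\lambda/2)$. $P_{n,\lambda}$ is $(\varepsilon,\delta)$-differentially private in the shuffled model if the map from $(x_1,\dots,x_n)$ to the shuffled sequence of messages is $(\varepsilon,\delta)$-differentially private. The algorithm $C_\lambda$ on input $(x_1,\dots,x_n)$: sample $s\sim\mathrm{Bin}(n,\lambda/n)$; choose $H\subseteq[n]$ uniformly among sets of size $s$; output $\sum_{i\notin H}x_i+B$ with $B\sim\mathrm{Bin}(s,1/2)$ independent. *)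

(* Defs.v *)
From mathcomp Require Import all_boot all_order all_algebra all_fingroup.
From mathcomp Require Import all_classical all_reals.
From mathcomp Require Import sequences exp.
Set Implicit Arguments. Unset Strict Implicit. Unset Printing Implicit Defensive.
Import Order.TTheory GRing.Theory Num.Theory.
Local Open Scope ring_scope.

Section Defs.
Variable R : realType.

Definition dataset (n : nat) := {ffun 'I_n -> bool}.

Definition neighbors (n : nat) (X X' : dataset n) : Prop :=
  exists i : 'I_n, X i != X' i /\ forall j : 'I_n, j != i -> X j = X' j.

(* (eps,delta)-DP of a randomized algorithm with finite output type O,
   given by its output distribution M X o = Pr[M(X) = o]. *)
Definition is_DP (n : nat) (O : finType) (M : dataset n -> O -> R)
  (eps delta : R) : Prop :=
  forall X X' : dataset n, neighbors X X' ->
  forall T : {set O},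
    \sum_(o in T) M X o <= expR eps * \sum_(o in T) M X' o + delta.

Definition binom_pmf (m : nat) (q : R) (k : nat) : R :=
  ('C(m, k))%:R * q ^+ k * (1 - q) ^+ (m - k).

(* Output distribution of C_lambda: s ~ Bin(n, lam/n); H uniform among
   subsets of [n] of size s; output sum_{i notin H} x_i + B, B ~ Bin(s,1/2).
   Outputs lie in {0,...,n}. *)
Definition C_alg (n : nat) (lam : R) (X : dataset n) (k : 'I_n.+1) : R :=
  \sum_(s < n.+1) binom_pmf n (lam / n%:R) s *
    \sum_(H : {set 'I_n} | #|H| == s)
      (#|[set H' : {set 'I_n} | #|H'| == s]|%:R)^-1 *
      \sum_(b < s.+1) binom_pmf s (2^-1) b *
        ((\sum_(i | i \notin H) (X i : nat) + b)%N == k :> nat)%:R.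

(* Local randomizer: with prob. lam/n send a fresh Ber(1/2) bit,
   otherwise send x.  Pr[y = c | x]. *)
Definition randomizer (n : nat) (lam : R) (x c : bool) : R :=
  (1 - lam / n%:R) * (x == c)%:R + (lam / n%:R) * 2^-1.

Definition messages (n : nat) (lam : R) (X : dataset n) (Y : dataset n) : R :=
  \prod_(i < n) randomizer n lam (X i) (Y i).

(* Output of the shuffler: (y_{s 0}, ..., y_{s (n-1)}) for a uniformly random
   permutation s of [n].  Pr[shuffled sequence = Z]. *)
Definition shuffled_P (n : nat) (lam : R) (X : dataset n) (Z : dataset n) : R :=
  \sum_(Y : dataset n) messages lam X Y *
    (#|[set s : 'S_n | [forall i, Z i == Y (s i)]]|%:R / (factorial n)%:R).

End Defs.

(* Main.v *)
Require Import Defs.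
From mathcomp Require Import all_boot all_order all_algebra all_fingroup.
From mathcomp Require Import all_classical all_reals.
From mathcomp Require Import sequences exp.
From mathcomp Require Import lra.
Import Order.TTheory GRing.Theory Num.Theory.
Local Open Scope ring_scope.
Set Implicit Arguments. Unset Strict Implicit. Unset Printing Implicit Defensive.
Lemma dp_weights (R : realFieldType) N (a b g : 'I_N -> R) (e d : R) :
  (forall T : {set 'I_N}, \sum_(o in T) a o <= e * \sum_(o in T) b o + d) ->
  (forall o, 0 <= g o) -> (forall o, g o <= 1) ->
  \sum_o a o * g o <= e * \sum_o b o * g o + d.
Proof.
move=> H g0 g1.
set S := [set o | e * b o < a o].
have HS := H S.
have E1 : \sum_o (a o - e * b o) * g o <= \sum_(o in S) (a o - e * b o).
  rewrite (bigID (mem S)) /= -[X in _ <= X]addr0; apply: lerD.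
    apply: ler_sum => o; rewrite inE => Ho; apply: ler_piMr => //.
    by rewrite subr_ge0 ltW.
  apply: sumr_le0 => o; rewrite inE -leNgt => Ho.
  by apply: mulr_le0_ge0 => //; rewrite subr_le0.
have E2 : \sum_(o in S) (a o - e * b o) = \sum_(o in S) a o - e * \sum_(o in S) b o.
  by rewrite sumrB mulr_sumr.
have E3 : \sum_o (a o - e * b o) * g o = \sum_o a o * g o - e * \sum_o b o * g o.
  by rewrite mulr_sumr -sumrB; apply: eq_bigr => o _; rewrite mulrBl mulrA.
lra.
Qed.
Lemma shuffle_sum (R : realType) n (lam : R) (X : dataset n) (T : {set dataset n}) :
  \sum_(Z in T) shuffled_P lam X Z =
  \sum_Y messages lam X Y *
    (#|[set s : 'S_n | [ffun i => Y (s i)] \in T]|%:R / (factorial n)%:R).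
Proof.
rewrite /shuffled_P exchange_big /=; apply: eq_bigr => Y _.
rewrite -mulr_sumr -mulr_suml; congr (_ * (_ / _)).
rewrite -natr_sum; congr _%:R.
rewrite -sum1_card (partition_big (fun s : 'S_n => [ffun i => Y (s i)] : dataset n) (mem T)) /=; last first.
  by move=> s; rewrite inE.
apply: eq_bigr => Z ZT; rewrite -sum1_card; apply: eq_bigl => s.
rewrite !inE; apply/forallP/andP => [H|[_ /eqP <- i]]; last by rewrite ffunE.
have -> : [ffun i => Y (s i)] = Z by apply/ffunP => i; rewrite ffunE; apply/esym/eqP.
by rewrite ZT.
Qed.
Lemma count_mktuple n (f : 'I_n -> bool) (a : pred bool) :
  count a (mktuple f) = (\sum_(i < n) (a (f i) : nat))%N.
Proof.
rewrite -sum1_count.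
have -> : (mktuple f : seq bool) = map f (enum 'I_n) by [].
rewrite big_map big_enum_cond /= big_mkcond /=.
by apply: eq_bigr => i _; case: (a (f i)).
Qed.

Definition wt n (Y : dataset n) : nat := (\sum_(i < n) (Y i : nat))%N.

Lemma sum_pred_bool n (a : pred bool) (Z : dataset n) :
  (\sum_(i < n) (a (Z i) : nat))%N = (a true * wt Z + a false * (n - wt Z))%N.
Proof.
have hc : (\sum_(i < n) (~~ Z i : nat))%N = (n - wt Z)%N.
  have : (\sum_(i < n) (~~ Z i : nat) + wt Z)%N = n.
    rewrite /wt -big_split /=.
    rewrite (eq_bigr (fun _ => 1%N)); first by rewrite sum1_card card_ord.
    by move=> i _; case: (Z i).
  move=> H; apply/eqP; rewrite -(eqn_add2r (wt Z)) H subnK //.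
  by rewrite -[X in (_ <= X)%N]H leq_addl.
rewrite -hc /wt !big_distrr -big_split /=; apply: eq_bigr => i _.
by case: (Z i); case: (a true); case: (a false).
Qed.

Lemma wt_trans n (Y Y' : dataset n) : wt Y = wt Y' ->
  exists t : 'S_n, Y' = [ffun i => Y (t i)].
Proof.
move=> E.
have P : perm_eq (mktuple (fun i => Y' i)) (mktuple (fun i => Y i)).
  by apply/seq.permP => a; rewrite !count_mktuple !sum_pred_bool E.
case/tuple_permP: P => p Hp; exists p; apply/ffunP => i; rewrite ffunE.
have Ht : mktuple (fun i => Y' i) = [tuple tnth (mktuple (fun i => Y i)) (p i) | i < n].
  by apply: val_inj.
by move: (congr1 (fun t => tnth t i) Ht) => /=; rewrite !tnth_mktuple.
Qed.

Definition W n (T : {set dataset n}) (Y : dataset n) : nat :=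
  #|[set s : 'S_n | [ffun i => Y (s i)] \in T]|.

Lemma W_perm n (T : {set dataset n}) (Y : dataset n) (t : 'S_n) :
  W T [ffun i => Y (t i)] = W T Y.
Proof.
rewrite /W -!sum1_card [RHS](reindex_inj (mulIg t)) /=.
apply: eq_bigl => s; rewrite !inE; congr (_ \in T); apply/ffunP => i.
by rewrite !ffunE permM.
Qed.

Lemma W_le n (T : {set dataset n}) (Y : dataset n) : (W T Y <= factorial n)%N.
Proof. by rewrite /W -card_Sn; apply: max_card. Qed.
From mathcomp Require Import ring.

Lemma sum_subsets (R : ringType) (T : finType) (H : {set T}) s (f : nat -> R) :
  #|H| = s ->
  \sum_(A : {set T} | A \subset H) f #|A| = \sum_(b < s.+1) ('C(s, b))%:R * f b.
Proof.
move=> Hs.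
rewrite (partition_big (fun A : {set T} => (inord #|A| : 'I_s.+1)) xpredT) //=.
apply: eq_bigr => b _.
have lt : forall A : {set T}, A \subset H -> (#|A| < s.+1)%N.
  by move=> A sub; rewrite ltnS -Hs subset_leq_card.
transitivity (\sum_(A : {set T} | (A \subset H) && (#|A| == b)) f b).
  apply: eq_big => [A|A /andP[sub /eqP Hb]]; last first.
    by congr f; rewrite -Hb inordK // lt.
  case sub: (A \subset H) => //=.
  apply/eqP/eqP => [<-|Hb]; first by rewrite inordK // lt.
  by apply: val_inj; rewrite /= inordK // lt.
rewrite sumr_const mulr_natl; congr (_ *+ _).
have -> : 'C(s, b) = 'C(#|H|, b) by rewrite Hs.
by rewrite -cards_draws cardsE.
Qed.

Section Key.
Variables (R : realType) (n : nat) (lam : R) (X : dataset n) (k : 'I_n.+1).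
Let p := lam / n%:R.
Definition mH (H : {set 'I_n}) : nat := (\sum_(i | i \notin H) (X i : nat))%N.
Definition cH (H : {set 'I_n}) : R := p ^+ #|H| * (1 - p) ^+ (n - #|H|) * (2^-1) ^+ #|H|.
Definition cnt (H : {set 'I_n}) : R :=
  \sum_(A : {set 'I_n} | A \subset H) ((mH H + #|A|)%N == k)%:R.

Lemma half_eq : 1 - 2^-1 = 2^-1 :> R.
Proof. by field. Qed.

Lemma claimC : C_alg lam X k = \sum_H cH H * cnt H.
Proof.
rewrite /C_alg (partition_big (fun H : {set 'I_n} => (inord #|H| : 'I_n.+1)) xpredT) //=.
apply: eq_bigr => s _; rewrite mulr_sumr.
have le : forall H : {set 'I_n}, (#|H| < n.+1)%N.
  by move=> H; rewrite ltnS; have := max_card H; rewrite card_ord.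
apply: eq_big => [H | H /eqP Hs].
  apply/eqP/eqP => [Hb|<-]; last by rewrite inordK.
  by apply: val_inj; rewrite /= inordK.
rewrite /cnt (sum_subsets (fun b => ((mH H + b)%N == k)%:R) Hs) card_draws card_ord.
have -> : \sum_(b < s.+1) binom_pmf s (2^-1 : R) b *
      ((\sum_(i | i \notin H) (X i : nat) + b)%N == k)%:R =
    (2^-1) ^+ s * \sum_(b < s.+1) ('C(s, b))%:R * ((mH H + b)%N == k)%:R.
  rewrite mulr_sumr; apply: eq_bigr => b _.
  rewrite /binom_pmf half_eq -!mulrA (mulrA (2^-1 ^+ b)) -exprD subnKC; last by rewrite -ltnS.
  by rewrite mulrCA.
have Cn : ('C(n, s))%:R != 0 :> R by rewrite pnatr_eq0 -lt0n bin_gt0 -ltnS.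
rewrite /cH Hs /binom_pmf -/p.
set S := \sum_(b < s.+1) _.
by field.
Qed.
End Key.

Section Key2.
Variables (R : realType) (n : nat) (lam : R) (X : dataset n) (k : 'I_n.+1).
Let p := lam / n%:R.

Definition agree (H : {set 'I_n}) (Y : dataset n) :=
  [forall i, (i \notin H) ==> (X i == Y i)].
Definition YA (H A : {set 'I_n}) : dataset n :=
  [ffun i => if i \in H then i \in A else X i].

Lemma wtYA (H A : {set 'I_n}) : A \subset H -> wt (YA H A) = (mH X H + #|A|)%N.
Proof.
move=> sub; rewrite /wt (bigID (mem H)) /= addnC; congr addn.
  rewrite /mH; apply: eq_big => [i //|i hi]; by rewrite ffunE (negbTE hi).
rewrite -sum1_card big_mkcond [RHS]big_mkcond /=; apply: eq_bigr => i _.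
rewrite ffunE; case: (boolP (i \in A)) => ia.
  by rewrite (fintype.subsetP sub _ ia).
by case: (i \in H).
Qed.

Lemma cnt_eq (H : {set 'I_n}) : \sum_(Y | wt Y == k) ((agree H Y)%:R : R) = cnt R X k H.
Proof.
transitivity (\sum_(Y | agree H Y) ((wt Y == k)%:R : R)).
  rewrite big_mkcond [RHS]big_mkcond /=; apply: eq_bigr => Y _.
  by case: (wt Y == k); case: (agree H Y).
rewrite (reindex_onto (YA H) (fun Y : dataset n => [set i | (i \in H) && Y i])); last first.
  move=> Y /forallP Ag; apply/ffunP => i; rewrite ffunE.
  case: (boolP (i \in H)) => hi; first by rewrite inE hi.
  by move: (Ag i); rewrite hi => /eqP.
apply: eq_big => [A|A].
  have agYA : agree H (YA H A).
    by apply/forallP => i; apply/implyP => hi; rewrite ffunE (negbTE hi).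
  have setYA : [set i | (i \in H) && YA H A i] = A :&: H.
    by apply/setP => i; rewrite !inE ffunE; case: (i \in H); rewrite ?andbT ?andbF.
  rewrite agYA setYA /=; apply/eqP/idP => [<-|sub]; first exact: subsetIr.
  exact/finset.setIidPl.
move=> /andP[_ /eqP E].
have sub : A \subset H by rewrite -E; apply/fintype.subsetP => i; rewrite inE => /andP[].
by rewrite wtYA.
Qed.

Lemma messages_expand (Y : dataset n) : messages lam X Y =
  \sum_(H : {set 'I_n}) (p * 2^-1) ^+ #|H| * (1 - p) ^+ (n - #|H|) * (agree H Y)%:R.
Proof.
rewrite /messages /randomizer -/p.
under eq_bigr do rewrite addrC.
rewrite bigA_distr; apply: eq_bigr => H _.
rewrite (bigID (mem H)) /=.
rewrite (eq_bigr (fun _ => p * 2^-1)); last by move=> i ->.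
rewrite prodr_const -mulrA; f_equal.
rewrite (eq_bigl (fun i => i \in ~: H)); last by move=> i /=; rewrite inE.
rewrite (eq_bigr (fun i => (1 - p) * (X i == Y i)%:R)); last first.
  by move=> i; rewrite inE => /negbTE ->.
rewrite big_split /= prodr_const.
have -> : #|~: H| = (n - #|H|)%N.
  have := cardsC H; rewrite card_ord => E.
  have hle : (#|H| <= n)%N by have := max_card H; rewrite card_ord.
  by apply/eqP; rewrite -(eqn_add2l #|H|) E subnKC.
congr (_ * _).
case: (boolP (agree H Y)) => Ag.
  by apply: big1 => i; rewrite inE => hi; move/forallP: Ag => /(_ i); rewrite hi => /eqP ->; rewrite eqxx.
move: Ag => /forallPn [i]; rewrite negb_imply => /andP[hi ne].
by rewrite (bigD1 i) ?inE //= (negbTE ne) mul0r.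
Qed.

Lemma claimM : \sum_(Y | wt Y == k) messages lam X Y = \sum_(H : {set 'I_n}) cH lam H * cnt R X k H.
Proof.
under eq_bigr do rewrite messages_expand.
rewrite exchange_big /=; apply: eq_bigr => H _.
rewrite -cnt_eq mulr_sumr /cH -/p; apply: eq_bigr => Y _.
by rewrite exprMn; congr (_ * _); rewrite mulrAC.
Qed.
End Key2.

Definition Ycan n (j : nat) : dataset n := [ffun i : 'I_n => (i < j)%N].

Lemma wt_can n j : (j <= n)%N -> wt (Ycan n j) = j.
Proof.
move=> hj; rewrite /wt.
rewrite (eq_bigr (fun i : 'I_n => ((i < j)%N : nat))); last by move=> i _; rewrite ffunE.
rewrite -(big_mkord xpredT (fun i => ((i < j)%N : nat))) (big_cat_nat (leq0n j) hj) /=.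
rewrite (eq_big_nat _ _ (F2 := fun _ => 1%N)); last by move=> i /andP[_ ->].
rewrite [X in (_ + X)%N](eq_big_nat _ _ (F2 := fun _ => 0%N)); last first.
  by move=> i /andP[hi _]; rewrite ltnNge hi.
by rewrite !sum_nat_const_nat muln0 addn0 muln1 subn0.
Qed.

Lemma wt_le n (Y : dataset n) : (wt Y <= n)%N.
Proof.
have : (\sum_(i < n) (Y i : nat) <= \sum_(i < n) 1)%N.
  by apply: leq_sum => i _; exact: leq_b1.
by rewrite sum_nat_const card_ord muln1.
Qed.

Unset Implicit Arguments.

Theorem claim4p3 (R : realType) (n : nat) (lam eps delta : R) :
  0 < lam -> lam < n%:R ->
  is_DP (C_alg (n:=n) lam) eps delta ->
  is_DP (shuffled_P (n:=n) lam) eps delta.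
Proof.
move=> _ _ HC X X' nb T.
pose g (k : 'I_n.+1) : R := (W T (Ycan n k))%:R / (factorial n)%:R.
have key : forall X0 : dataset n, \sum_(Z in T) shuffled_P lam X0 Z =
    \sum_(k < n.+1) C_alg lam X0 k * g k.
  move=> X0; rewrite shuffle_sum.
  transitivity (\sum_Y messages lam X0 Y * g (inord (wt Y))).
    apply: eq_bigr => Y _; congr (_ * _); rewrite /g; congr (_%:R / _).
    change (W T Y = W T (Ycan n (inord (wt Y) : 'I_n.+1))).
    have E : wt (Ycan n (inord (wt Y) : 'I_n.+1)) = wt Y.
      by rewrite inordK ?ltnS ?wt_le // wt_can // wt_le.
    have [t Ht] := wt_trans E.
    by rewrite [in LHS]Ht W_perm.
  rewrite (partition_big (fun Y => (inord (wt Y) : 'I_n.+1)) xpredT) //=.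
  apply: eq_bigr => k _.
  rewrite claimC -claimM mulr_suml.
  apply: eq_big => [Y|Y /eqP Hk]; last by rewrite Hk.
  apply/eqP/eqP => [<-|Hb]; first by rewrite inordK // ltnS wt_le.
  by apply: val_inj; rewrite /= inordK // ltnS wt_le.
rewrite !key; apply: dp_weights (HC X X' nb) _ _ => k.
  by rewrite /g divr_ge0 ?ler0n.
rewrite /g ler_pdivrMr ?ltr0n ?fact_gt0 // mul1r ler_nat.
exact: W_le.
Qed.
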